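(* Let $I=\{a,b,c,d,e\}$ and $X=I^{\mathbb N_0}$ with the metric $\rho(x,y)=0$ if $x=y$ and $\rho(x,y)=\frac1{i+1}$ where $i=\min\{j:x_j\ne y_j\}$ otherwise. Let $\sigma$ be the shift $\sigma(x_0,x_1,\dots)=(x_1,x_2,\dots)$. Let $U=\{0,1,2,3\}$ and define $F_0=\sigma^2$, $F_1=\sigma^3$, $F_2\equiv b^\infty$ (constant map), and $F_3(x)=(ab)^\infty$ if $x_0=b$, $F_3(x)=b^\infty$ otherwise. Consider the control system $x_{n+1}=F_{u_n}(x_n)$ and let $Q\subset X$ be the set of all sequences that are infinite concatenations $w_0w_1w_2\cdots$ of words $w_i\in\{ab,\,cde\}$. Then $Q$ is (compact and) equi-invariant in the mean, but not finitely equi-invariant.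
   Context: For $\omega=(\omega_0,\omega_1,\dots)\in\mathscr U=U^{\mathbb N_0}$ and $x\in X$: $\phi(0,x,\omega)=x$, $\phi(k,x,\omega)=F_{\omega_{k-1}}\circ\cdots\circ F_{\omega_0}(x)$. $d(y,Q)=\inf_{q\in Q}\rho(y,q)$, $B_\varepsilon(Q)=\{y:d(y,Q)<\varepsilon\}$, $B(x,\delta)$ open ball, $\mathbb N=\{1,2,\dots\}$. A point $x\in Q$ is a finitely equi-invariant point of $Q$ if for every $\varepsilon>0$ there exist $\delta>0$ and a finite set $F\subset\mathscr U$ such that for every $y\in B(x,\delta)\cap Q$ there is $\omega\in F$ with $\phi(k,y,\omega)\in B_\varepsilon(Q)$ for all $k\in\mathbb N_0$. It is an equi-invariant point in the mean of $Q$ if for every $\varepsilon>0$ there exist $\delta>0$ and $\omega\in\mathscr U$ such that $\frac1n\sum_{i=0}^{n-1}d(\phi(i,y,\omega),Q)<\varepsilon$ for all $n\in\mathbb N$ and all $y\in B(x,\delta)\cap Q$. $Q$ has one of these properties if all its points do. *)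

(* Defs.v *)
From HB Require Import structures.
From mathcomp Require Import all_boot all_order all_algebra.
From mathcomp Require Import all_classical all_reals.
Set Implicit Arguments. Unset Strict Implicit. Unset Printing Implicit Defensive.
Import Order.TTheory GRing.Theory Num.Theory.
Local Open Scope classical_set_scope.
Local Open Scope ring_scope.

Fixpoint phi (X U : Type) (F : U -> X -> X) (k : nat) (x : X) (w : nat -> U) : X :=
  match k with
  | 0%N => x
  | k'.+1 => F (w k') (phi F k' x w)
  end.

Section General.
Context (R : realType) (X U : Type) (rho : X -> X -> R) (F : U -> X -> X).

Definition dist (y : X) (Q : set X) : R := inf [set rho y q | q in Q].

Definition nbhdQ (eps : R) (Q : set X) : set X := [set y | dist y Q < eps].

Definition oball (x : X) (delta : R) : set X := [set y | rho x y < delta].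

Definition finitely_equi_invariant_point (Q : set X) (x : X) : Prop :=
  Q x /\
  forall eps : R, 0 < eps ->
    exists delta : R, 0 < delta /\
    exists Fs : set (nat -> U), finite_set Fs /\
      forall y, oball x delta y -> Q y ->
        exists w, Fs w /\ forall k : nat, nbhdQ eps Q (phi F k y w).

Definition equi_invariant_in_mean_point (Q : set X) (x : X) : Prop :=
  Q x /\
  forall eps : R, 0 < eps ->
    exists delta : R, 0 < delta /\
    exists w : nat -> U,
      forall (n : nat) (y : X), (1 <= n)%N -> oball x delta y -> Q y ->
        (n%:R)^-1 * (\sum_(i < n) dist (phi F i y w) Q) < eps.

Definition finitely_equi_invariant (Q : set X) : Prop :=
  forall x, Q x -> finitely_equi_invariant_point Q x.

Definition equi_invariant_in_mean (Q : set X) : Prop :=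
  forall x, Q x -> equi_invariant_in_mean_point Q x.

Definition rho_open (O : set X) : Prop :=
  forall x, O x -> exists r : R, 0 < r /\ oball x r `<=` O.

Definition rho_compact (Q : set X) : Prop :=
  forall C : set (set X), (forall O, C O -> rho_open O) ->
    Q `<=` \bigcup_(O in C) O ->
    exists D : set (set X), [/\ D `<=` C, finite_set D & Q `<=` \bigcup_(O in D) O].

End General.

Inductive I5 : Type := a | b | c | d | e.

Definition Xs : Type := nat -> I5.

(* index of first difference (only meaningful when x <> y) *)
Definition first_diff (x y : Xs) : nat :=
  xget 0%N [set i | x i <> y i /\ forall j, (j < i)%N -> x j = y j].

Definition rhoX (R : realType) (x y : Xs) : R :=
  if pselect (x = y) then 0 else ((first_diff x y).+1%:R)^-1.

Definition shift (x : Xs) : Xs := fun n => x n.+1.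

Definition const_b : Xs := fun _ => b.
Definition ab_inf : Xs := fun n => if odd n then b else a.

Inductive U4 : Type := u0 | u1 | u2 | u3.

Definition Fex (u : U4) (x : Xs) : Xs :=
  match u with
  | u0 => shift (shift x)
  | u1 => shift (shift (shift x))
  | u2 => const_b
  | u3 => match x 0%N with b => ab_inf | _ => const_b end
  end.

Definition word (t : bool) : seq I5 := if t then [:: a; b] else [:: c; d; e].

Definition word_start (ws : nat -> bool) (k : nat) : nat :=
  (\sum_(i < k) size (word (ws i)))%N.

Definition Qex : set Xs :=
  [set x | exists ws : nat -> bool,
     forall k j : nat, (j < size (word (ws k)))%N ->
       x (word_start ws k + j)%N = nth a (word (ws k)) j].

(* Main.v *)
Require Import Defs.
From mathcomp Require Import all_boot all_order all_algebra.
From mathcomp Require Import all_classical all_reals.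
From mathcomp Require Import zify.
Import Order.TTheory GRing.Theory Num.Theory.
Local Open Scope classical_set_scope.
Local Open Scope ring_scope.

Lemma notnot_eq {T} (u v : T) : ~ (u <> v) -> u = v.
Proof. exact: (contra_notP (fun h => h)). Qed.

Lemma first_diff_spec (x y : Xs) : x <> y ->
  x (Defs.first_diff x y) <> y (Defs.first_diff x y) /\
  forall j, (j < Defs.first_diff x y)%N -> x j = y j.
Proof.
move=> nxy.
have exP : exists n, `[< x n <> y n >].
  apply/not_existsP => H; apply: nxy; apply: funext => n.
  by apply: notnot_eq => /asboolP /H.
case: (ex_minnP exP) => m /asboolP Hm Hmin.
have Hlt : forall j, (j < m)%N -> x j = y j.
  move=> j jm; apply: notnot_eq => /asboolP /Hmin.
  by rewrite leqNgt jm.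
rewrite /Defs.first_diff (@xget_unique _ _ _ m) //.
move=> k [Hk Hkj]; apply/eqP; rewrite eqn_leq Hmin ?andbT; last by apply/asboolP.
rewrite leqNgt; apply/negP => /Hkj.
done.
Qed.

Section Rho.
Variable R : realType.

Lemma rho_agree (x y : Xs) n : (forall j, (j < n)%N -> x j = y j) ->
  @rhoX R x y <= (n.+1)%:R^-1.
Proof.
move=> H; rewrite /rhoX; case: pselect => [exy|nxy]; first by rewrite invr_ge0.
have [Hd Hb] := @first_diff_spec x y nxy.
have Hn : (n <= Defs.first_diff x y)%N.
  rewrite leqNgt; apply/negP => /H; done.
rewrite lef_pV2 ?posrE ?ltr0n // ler_nat; done.
Qed.

Lemma rho_ge0 (x y : Xs) : 0 <= @rhoX R x y.
Proof. by rewrite /rhoX; case: pselect => [//|?]; rewrite invr_ge0. Qed.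

Lemma rho_le1 (x y : Xs) : @rhoX R x y <= 1.
Proof. have H := @rho_agree x y 0%N (fun j (hj : (j < 0)%N) => False_ind _ (notF hj)).
by rewrite invr1 in H. Qed.

Lemma rho_diff0 (x y : Xs) : x 0%N <> y 0%N -> @rhoX R x y = 1.
Proof.
move=> H; rewrite /rhoX; case: pselect => [exy|nxy]; first by rewrite exy in H.
have [Hd Hb] := @first_diff_spec x y nxy.
have -> : Defs.first_diff x y = 0%N.
  case E: (Defs.first_diff x y) => [//|k]; exfalso; apply: H; apply: Hb; by rewrite E.
by rewrite invr1.
Qed.

Lemma rho_refl (x : Xs) : @rhoX R x x = 0.
Proof. by rewrite /rhoX; case: pselect. Qed.

End Rho.

Section Dist.
Variable R : realType.

Lemma dist_le (y q : Xs) (Q : set Xs) : Q q -> dist (@rhoX R) y Q <= rhoX R y q.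
Proof.
move=> Qq; rewrite /dist; apply: ge_inf; last by exists q.
by exists 0 => _ [z _ <-]; apply: rho_ge0.
Qed.

Lemma dist_ge (y : Xs) (Q : set Xs) l : Q !=set0 ->
  (forall q, Q q -> l <= rhoX R y q) -> l <= dist (@rhoX R) y Q.
Proof.
move=> [q Qq] H; rewrite /dist; apply: lb_le_inf; first by exists (rhoX R y q), q.
by move=> _ [z Qz <-]; apply: H.
Qed.

Lemma dist_in (y : Xs) (Q : set Xs) : Q y -> dist (@rhoX R) y Q <= 0.
Proof. by move=> Qy; apply: le_trans (@dist_le y y Q Qy) _; rewrite rho_refl. Qed.

Lemma dist_le1 (y q : Xs) (Q : set Xs) : Q q -> dist (@rhoX R) y Q <= 1.
Proof. by move=> Qq; apply: le_trans (@dist_le y q Q Qq) _; apply: rho_le1. Qed.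

Lemma dist_ge0 (y : Xs) (Q : set Xs) : Q !=set0 -> 0 <= dist (@rhoX R) y Q.
Proof. by move=> Qn; apply: dist_ge => // q _; apply: rho_ge0. Qed.

End Dist.

Definition Qrep (x : Xs) (ws : nat -> bool) :=
  forall k j : nat, (j < size (word (ws k)))%N ->
       x (word_start ws k + j)%N = nth a (word (ws k)) j.

Lemma word_start0 ws : word_start ws 0 = 0%N.
Proof. by rewrite /word_start big_ord0. Qed.

Lemma word_startS ws k : word_start ws k.+1 = (word_start ws k + size (word (ws k)))%N.
Proof. by rewrite /word_start big_ord_recr. Qed.

Fixpoint st (x : Xs) (k : nat) : nat :=
  match k with
  | 0%N => 0%N
  | k'.+1 => (st x k' + (if x (st x k') is a then 2 else 3))%N
  end.

Definition pws (x : Xs) (k : nat) : bool := if x (st x k) is a then true else false.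

Lemma size_pws x k : size (word (pws x k)) = (if x (st x k) is a then 2 else 3)%N.
Proof. by rewrite /pws; case: (x (st x k)). Qed.

Lemma stS x k : st x k.+1 = (st x k + size (word (pws x k)))%N.
Proof. by rewrite size_pws. Qed.

Lemma Q_canon x ws : Qrep x ws -> forall k, word_start ws k = st x k /\ ws k = pws x k.
Proof.
move=> H; elim=> [|k [IH1 IH2]].
  have := H 0%N 0%N; rewrite word_start0 /pws /=.
  by case: (ws 0%N) => /= -> .
have Hs : word_start ws k.+1 = st x k.+1 by rewrite word_startS stS IH1 IH2.
split=> //; have := H k.+1 0%N; rewrite addn0 Hs /pws.
by case: (ws k.+1) => /= -> .
Qed.

Lemma word_start_pws x k : word_start (pws x) k = st x k.
Proof. by elim: k => [|k IH]; rewrite ?word_start0 // word_startS stS IH. Qed.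

Lemma Q_iff x : Qex x <-> Qrep x (pws x).
Proof.
split; last by move=> H; exists (pws x).
move=> [ws H] k j; have [H1 H2] := @Q_canon x ws H k.
rewrite word_start_pws -H1 -H2; exact: H.
Qed.

Lemma st_mono x i k : (i <= k)%N -> (st x i <= st x k)%N.
Proof.
move=> /subnK <-; elim: (k - i)%N => [|m IH] //.
by rewrite addSn /= (leq_trans IH) // leq_addr.
Qed.

Lemma st_le3 x k : (st x k <= 3 * k)%N.
Proof.
elim: k => [|k IH] //=; rewrite mulnS addnC leq_add //.
by case: (x (st x k)).
Qed.

Lemma st_agree x y n : (forall j, (j < n)%N -> x j = y j) ->
  forall k, (st x k < n)%N -> st x k = st y k /\ pws x k = pws y k.
Proof.
move=> H; elim=> [|k IH] Hk.
  by rewrite /pws /= H.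
have Hk' : (st x k < n)%N by apply: leq_ltn_trans Hk; apply: st_mono.
have [E1 E2] := IH Hk'.
have E3 : st x k.+1 = st y k.+1 by rewrite !stS E1 E2.
by split=> //; rewrite /pws E3 H // -E3.
Qed.

Lemma archi_inv (R : realType) (eps : R) : 0 < eps -> exists M : nat, (M.+1%:R)^-1 < eps.
Proof.
move=> e0; exists (Num.Def.trunc eps^-1).
have H := truncnS_gt (eps^-1).
by rewrite -[X in _ < X]invrK ltf_pV2 // posrE ?invr_gt0 ?ltr0n.
Qed.

Lemma rho_lt_agree (R : realType) (x y : Xs) L :
  @rhoX R x y < (L.+1%:R)^-1 -> forall j, (j < L)%N -> x j = y j.
Proof.
rewrite /rhoX; case: pselect => [exy _ j _|nxy]; first by rewrite exy.
have [Hd Hb] := @first_diff_spec x y nxy.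
move=> HL j jL; move: HL; rewrite ltf_pV2 ?posrE ?ltr0n // ltr_nat ltnS => HL.
by apply: Hb; apply: leq_trans jL (ltnW HL).
Qed.

Lemma Q_closed x : (forall n, exists y, Qex y /\ forall j, (j < n)%N -> x j = y j) -> Qex x.
Proof.
move=> H; apply/Q_iff => k j Hj.
have [y [Qy Hy]] := H (st x k + 3)%N.
have H3 : (st x k < st x k + 3)%N by rewrite -{1}[st x k]addn0 ltn_add2l.
have [E1 E2] := @st_agree x y _ Hy k H3.
have Hj3 : (j < 3)%N by move: Hj; case: (pws x k) => /= ?; lia.
rewrite word_start_pws Hy; last by rewrite ltn_add2l.
move/Q_iff: Qy => Qy; have := Qy k j; rewrite word_start_pws E1 E2; apply.
by rewrite -E2.
Qed.

Definition shiftn (s : nat) (y : Xs) : Xs := fun j => y (s + j)%N.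

Lemma st_shiftn y k i : st y (k + i) = (st y k + st (shiftn (st y k) y) i)%N.
Proof.
elim: i => [|i IH]; first by rewrite !addn0.
by rewrite addnS /= IH /shiftn addnA.
Qed.

Lemma shiftn_Q y k : Qex y -> Qex (shiftn (st y k) y).
Proof.
move/Q_iff => Qy; apply/Q_iff => i j.
have Hp : pws (shiftn (st y k) y) i = pws y (k + i) by rewrite /pws st_shiftn.
rewrite Hp word_start_pws => Hj.
rewrite {1}/shiftn addnA -st_shiftn.
by have := Qy (k + i)%N j; rewrite word_start_pws; apply.
Qed.

Lemma ws_true k : word_start (fun _ => true) k = (2 * k)%N.
Proof. by elim: k => [|k IH]; rewrite ?word_start0 // word_startS IH /=; lia. Qed.

Lemma ab_inf_Q : Qex ab_inf.
Proof.
exists (fun _ => true) => k j /=; rewrite ws_true /ab_inf.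
case: j => [|[|]] //= _; first by rewrite addn0 oddM.
by rewrite addn1 /= oddM.
Qed.

Lemma shift2_ab : shift (shift ab_inf) = ab_inf.
Proof. by apply: funext => n; rewrite /shift /ab_inf /= negbK. Qed.

Lemma sum_ind (R : realType) n k :
  \sum_(i < n) (((i : nat) == k)%:R : R) = ((k < n)%N)%:R.
Proof.
elim: n => [|n IH]; first by rewrite big_ord0.
rewrite big_ord_recr /= IH.
case: (ltngtP k n) => [kn|nk|->].
- by rewrite addr0 ltnS ltnW.
- by rewrite ltnS leqNgt nk addr0.
- by rewrite ?add0r ltnSn.
Qed.

Lemma part2 (R : realType) : equi_invariant_in_mean (@rhoX R) Fex Qex.
Proof.
move=> x Qx; split=> // eps e0.
have [M HM] := @archi_inv R eps e0.
pose L := (3 * M).+1.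
exists (L.+1%:R)^-1; split; first by rewrite invr_gt0 ltr0n.
pose w := fun i : nat => if (i < M)%N then (if pws x i then u0 else u1)
   else if i == M then u2 else if i == M.+1 then u3 else u0.
exists w => n y n1 Hy Qy.
have Hag := @rho_lt_agree R x y L Hy.
have traj1 : forall k, (k <= M)%N -> phi Fex k y w = shiftn (st x k) y.
  elim=> [|k IH] kM; first by apply: funext.
  rewrite /= IH ?(ltnW kM) // /w kM /pws.
  by case: (x (st x k)) => /=; apply: funext => j; rewrite /shift /shiftn; congr y; lia.
have inQ1 : forall k, (k <= M)%N -> Qex (phi Fex k y w).
  move=> k kM; rewrite traj1 //.
  have Hk : (st x k < L)%N.
    apply: leq_ltn_trans (@st_mono x k M kM) _; apply: leq_ltn_trans (st_le3 x M) _.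
    exact: ltnSn.
  have [E1 _] := @st_agree x y L Hag k Hk. rewrite E1; exact: shiftn_Q.
have trajM1 : phi Fex M.+1 y w = const_b.
  by rewrite /= /w ltnn eqxx.
have wbig : forall i, (M.+1 < i)%N -> w i = u0.
  move=> i Hi; rewrite /w.
  case: ifP => [?|_]; first lia.
  case: eqP => [?|_]; first lia.
  case: eqP => [?|_] //; lia.
have trajM2 : forall j, phi Fex (M.+2 + j) y w = ab_inf.
  elim=> [|j IH].
    have -> : phi Fex (M.+2 + 0) y w = Fex (w M.+1) (phi Fex M.+1 y w) by rewrite addn0.
    have wM1 : w M.+1 = u3 by rewrite /w ltnNge leqnSn /= (gtn_eqF (ltnSn M)) eqxx.
    by rewrite trajM1 wM1.
  have -> : phi Fex (M.+2 + j.+1) y w = Fex (w (M.+2 + j)) (phi Fex (M.+2 + j) y w)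
    by rewrite addnS.
  by rewrite IH wbig /=; [exact: shift2_ab | lia].
have Hterm : forall i : nat, dist (@rhoX R) (phi Fex i y w) Qex <= ((i == M.+1)%:R).
  move=> i; case: (ltngtP i M.+1) => [iM|iM|->].
  - by apply: dist_in; apply: inQ1; rewrite -ltnS.
  - rewrite (_ : i = M.+2 + (i - M.+2))%N; last by lia.
    by rewrite trajM2; apply: dist_in; exact: ab_inf_Q.
  - by apply: (@dist_le1 R _ ab_inf); exact: ab_inf_Q.
have Hsum : \sum_(i < n) dist (@rhoX R) (phi Fex i y w) Qex <= ((M.+1 < n)%N)%:R.
  by rewrite -sum_ind; apply: ler_sum => i _; apply: Hterm.
move: Hsum; case: ltnP => Hn Hsum.
- apply: le_lt_trans HM.
  apply: le_trans (ler_wpM2l _ Hsum) _; first by rewrite invr_ge0 ler0n.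
  rewrite mulr1 lef_pV2 ?posrE ?ltr0n ?ler_nat //; exact: ltnW.
- apply: le_lt_trans e0.
  by apply: le_trans (ler_wpM2l _ Hsum) _; rewrite ?invr_ge0 ?ler0n ?mulr0.
Qed.

Definition pre (t : bool) (z : Xs) : Xs :=
  fun n => if (n < size (word t))%N then nth a (word t) n else z (n - size (word t))%N.

Lemma pre_Q t z : Qex z -> Qex (pre t z).
Proof.
move=> [ws H].
pose ws' := fun k => if k is k'.+1 then ws k' else t.
have Hs : forall k, word_start ws' k.+1 = (size (word t) + word_start ws k)%N.
  elim=> [|k IH]; first by rewrite word_startS !word_start0 addn0.
  by rewrite word_startS IH word_startS addnA.
exists ws' => -[|k] j Hj.
  by rewrite word_start0 /pre /= Hj.
rewrite Hs /pre -addnA ltnNge leq_addr /= addKn; exact: H.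
Qed.

Lemma shift2_pre z : shift (shift (pre true z)) = z.
Proof. by apply: funext => j; rewrite /shift /pre /= subSS subSS subn0. Qed.

Lemma shift3_pre z : shift (shift (shift (pre false z))) = z.
Proof. by apply: funext => j; rewrite /shift /pre /= !subSS subn0. Qed.

Lemma ab_pre : pre true ab_inf = ab_inf.
Proof.
apply: funext => -[|[|n]] //.
by rewrite /pre /= subSS subSS subn0 /ab_inf /= negbK.
Qed.

Definition ys (N : nat) : Xs := iter N (pre true) (pre false ab_inf).

Lemma ys_Q N : Qex (ys N).
Proof.
rewrite /ys; elim: N => [|N IH] /=; apply: pre_Q => //; exact: ab_inf_Q.
Qed.

Lemma pre_agree t z z' m : (forall j, (j < m)%N -> z j = z' j) ->
  forall j, (j < m + size (word t))%N -> pre t z j = pre t z' j.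
Proof.
move=> H j Hj; rewrite /pre; case: ifP => // /negbT; rewrite -leqNgt => Hle.
by apply: H; lia.
Qed.

Lemma iter_agree N z z' : forall j, (j < 2 * N)%N ->
  iter N (pre true) z j = iter N (pre true) z' j.
Proof.
elim: N => [|N IH] j //=.
move=> Hj; apply: (@pre_agree true _ _ (2 * N)) => //; rewrite /=; lia.
Qed.

Lemma ys_agree N : forall j, (j < 2 * N)%N -> ys N j = ab_inf j.
Proof.
have E : iter N (pre true) ab_inf = ab_inf.
  by elim: N => [|N IH] //=; rewrite IH ab_pre.
move=> j Hj; rewrite -E /ys; exact: iter_agree.
Qed.

Definition good (z : Xs) := z 0%N = a \/ z 0%N = c.

Lemma Q_good q : Qex q -> good q.
Proof.
move/Q_iff => H; have := H 0%N 0%N; rewrite word_start_pws /= /good.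
by case: (pws q 0%N) => /= ->; auto.
Qed.

Lemma nbhd_good (R : realType) z : nbhdQ (@rhoX R) 1 Qex z -> good z.
Proof.
rewrite /nbhdQ /= => H; have [//|ng] := EM (good z); exfalso.
have : 1 <= dist (@rhoX R) z Qex.
  apply: dist_ge; first by exists ab_inf; exact: ab_inf_Q.
  move=> q /Q_good Hq; rewrite rho_diff0 //.
  move=> E; apply: ng; rewrite /good E; exact: Hq.
by rewrite leNgt H.
Qed.

Lemma phiS (F : U4 -> Xs -> Xs) k (y : Xs) w : phi F k.+1 y w = F (w k) (phi F k y w).
Proof. by []. Qed.

Lemma traj3 N w : (forall k, good (phi Fex k (ys N) w)) ->
  (forall k, (k < N)%N -> w k = u0) /\ w N = u1.
Proof.
move=> G.
have H : forall k, (k <= N)%N ->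
    phi Fex k (ys N) w = iter (N - k) (pre true) (pre false ab_inf) /\
    (forall i, (i < k)%N -> w i = u0).
  elim=> [|k IH] kN; first by rewrite subn0; split.
  have [E1 E2] := IH (ltnW kN).
  have E3 : (N - k = (N - k.+1).+1)%N by lia.
  rewrite E3 /= in E1.
  set z' := iter (N - k.+1) (pre true) (pre false ab_inf) in E1 *.
  have [t [z'' Ez']] : exists t z'', z' = pre t z''.
    by rewrite /z'; case: (N - k.+1)%N => [|m] /=; eexists; eexists.
  have Gk := G k.+1; rewrite phiS E1 in Gk.
  move: Gk; case Ew: (w k) => /= Gk.
  - split; first by rewrite E1 Ew /= shift2_pre.
    move=> i; rewrite ltnS leq_eqVlt => /orP[/eqP -> //|]; exact: E2.
  - exfalso; move: Gk; rewrite /good /shift /pre Ez' /=; by case: t {Ez'} => /= -[].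
  - by exfalso; case: Gk.
  - by exfalso; case: Gk.
have [E1 E2] := H N (leqnn N); split => //.
rewrite subnn /= in E1.
have Gk := G N.+1; rewrite phiS E1 in Gk.
move: Gk; case Ew: (w N) => //= Gk; exfalso.
- by move: Gk; rewrite /good /shift /pre /= => -[].
- by case: Gk.
- by case: Gk.
Qed.

Lemma part3 (R : realType) : ~ finitely_equi_invariant (@rhoX R) Fex Qex.
Proof.
move=> H; have [_ H1] := H ab_inf ab_inf_Q.
have [delta [d0 [Fs [fin HF]]]] := H1 1 ltr01.
have [L HL] := @archi_inv R delta d0.
have Hy : forall t, exists w, Fs w /\
    forall k, nbhdQ (@rhoX R) 1 Qex (phi Fex k (ys (L + t)) w).
  move=> t; apply: HF; last exact: ys_Q.
  rewrite /oball; apply: le_lt_trans HL; apply: rho_agree => j Hj.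
  by rewrite ys_agree //; lia.
have [f Hf] := choice Hy.
have G : forall t k, good (phi Fex k (ys (L + t)) (f t)).
  by move=> t k; apply: (@nbhd_good R); exact: ((Hf t).2 k).
have inj : injective f.
  move=> t s Eft.
  have [A1 A2] := @traj3 (L + t)%N (f t) (G t).
  have [B1 B2] := @traj3 (L + s)%N (f s) (G s).
  case: (ltngtP t s) => // ts; exfalso.
  - have := B1 (L + t)%N; rewrite ltn_add2l => /(_ ts); by rewrite -Eft A2.
  - have := A1 (L + s)%N; rewrite ltn_add2l => /(_ ts); by rewrite Eft B2.
apply: infinite_nat.
apply: (@sub_finite_set _ _ (f @^-1` Fs)); first by move=> t _; exact: (Hf t).1.
apply: finite_preimage => //; move=> t s _ _; exact: inj.
Qed.

Definition upd (p : Xs) (n : nat) (l : I5) : Xs := fun j => if j == n then l else p j.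

Lemma part1 (R : realType) : rho_compact (@rhoX R) Qex.
Proof.
move=> C Copen Qcov.
pose cyl n (p : Xs) := [set y : Xs | forall j, (j < n)%N -> y j = p j].
pose Good n p := exists D : set (set Xs),
  [/\ D `<=` C, finite_set D & Qex `&` cyl n p `<=` \bigcup_(O in D) O].
have [[D [CD fD cov]]|NG0] := EM (Good 0%N (fun _ => a)).
  by exists D; split => // y Qy; apply: cov; split.
exfalso.
have step : forall np : nat * Xs, exists l,
    ~ Good np.1 np.2 -> ~ Good np.1.+1 (upd np.2 np.1 l).
  move=> [n p] /=; have [g|ng] := EM (Good n p); first by exists a.
  apply: (@contra_notP _ (Good n p)) ng => Hall.
  have Hl : forall l, Good n.+1 (upd p n l).
    move=> l; apply: contra_notP Hall => Hn; exists l => _; exact: Hn.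
  have [Df HDf] := choice Hl.
  have HC : forall l, Df l `<=` C by move=> l; case: (HDf l).
  have HF : forall l, finite_set (Df l) by move=> l; case: (HDf l).
  have HV : forall l, Qex `&` cyl n.+1 (upd p n l) `<=` \bigcup_(O in Df l) O.
    by move=> l; case: (HDf l).
  exists (Df a `|` Df b `|` Df c `|` Df d `|` Df e); split.
  - move=> O [[[[H|H]|H]|H]|H]; exact: HC H.
  - rewrite !finite_setU; split; [split; [split; [split|]|]|]; exact: HF.
  - move=> y [Qy cy].
    have cy' : cyl n.+1 (upd p n (y n)) y.
      move=> j; rewrite ltnS leq_eqVlt /upd => /orP[/eqP ->|jn]; first by rewrite eqxx.
      by rewrite (ltn_eqF jn) cy.
    have [O HO Oy] := HV (y n) y (conj Qy cy').
    exists O => //; move: HO; case: (y n) => HO; by [left; left; left; left |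
      left; left; left; right | left; left; right | left; right | right].
have [h Hh] := choice step.
pose g := fix g (n : nat) : Xs :=
  match n with 0%N => (fun _ => a) | n'.+1 => upd (g n') n' (h (n', g n')) end.
have gS : forall n, g n.+1 = upd (g n) n (h (n, g n)) by [].
have Bad : forall n, ~ Good n (g n).
  elim=> [|n IH] //; rewrite gS; exact: (Hh (n, g n) IH).
pose x : Xs := fun n => g n.+1 n.
have agree : forall m j, (j < m)%N -> g m j = x j.
  elim=> [|m IH] j // jm; rewrite gS /upd; case: eqP => [->|ne].
    by rewrite /x gS /upd eqxx.
  apply: IH; move: jm; rewrite ltnS leq_eqVlt => /orP[/eqP //|//].
have Badx : forall n, ~ Good n x.
  move=> n [D [CD fD cov]]; apply: (Bad n); exists D; split => // y [Qy cy].
  by apply: cov; split => // j jn; rewrite cy // agree.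
have ne : forall n, exists y, Qex y /\ forall j, (j < n)%N -> x j = y j.
  move=> n; have [//|nn] := EM (exists y, Qex y /\ forall j, (j < n)%N -> x j = y j).
  exfalso; apply: (Badx n); exists set0; split; [by move=> ? | exact: finite_set0 |].
  move=> y [Qy cy]; exfalso; apply: nn; exists y; split => // j jn; by rewrite cy.
have Qx := @Q_closed x ne.
have [O CO Ox] := Qcov x Qx.
have [r [r0 Hr]] := Copen O CO x Ox.
have [n Hn] := @archi_inv R r r0.
apply: (Badx n); exists [set O]; split; first by move=> ? ->.
  exact: finite_set1.
move=> y [Qy cy]; exists O => //; apply: Hr; rewrite /oball.
apply: le_lt_trans Hn; apply: rho_agree => j jn; by rewrite cy.
Qed.

Theorem mainTheorem15 (R : realType) :
  rho_compact (@rhoX R) Qex /\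
  equi_invariant_in_mean (@rhoX R) Fex Qex /\
  ~ finitely_equi_invariant (@rhoX R) Fex Qex.
Proof.
split; first exact: part1.
split; first exact: part2.
exact: part3.
Qed.
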